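(* Let $s\in\mathscr S_+$ and let $\operatorname{supp}(s)=X_0\amalg X_1\amalg\cdots\amalg X_k$ be its interval decomposition, with $l_i:=\#X_i$ for $i\in[0,k]$. Then $$\mathfrak d(s)=l_0+2\left\lceil \tfrac{l_1}{2}\right\rceil+\cdots+2\left\lceil \tfrac{l_k}{2}\right\rceil .$$
   Context: $\omega$ denotes the natural numbers including $0$; $[n,m]=\{x\in\omega:n\le x\le m\}$, $[m]=[1,m]$. A finite sign sequence is $s=(s_i)_{i\in\omega}\in\{-,0,+\}^\omega$ with only finitely many nonzero entries; $\mathscr S$ is the set of all of them; $\operatorname{supp}(s)=\{i:s_i\ne0\}$; $\mathscr S_+=\mathscr S\cap\{0,+\}^\omega$. $\mathrm{SC}(t)$ is the number of pairs $i<j$ with $\{t_i,t_j\}=\{-,+\}$ and $t_k=0$ for all $i<k<j$. For $s\in\mathscr S_+$, $\mathfrak d(s)=\max\{\mathrm{SC}(t): t\in\mathscr S,\ t_i\in\{-,0,s_i\}\ \forall i\}$. The interval decomposition of $s\in\mathscr S_+$ is the unique decomposition $\operatorname{supp}(s)=X_0\amalg\cdots\amalg X_k$ such that each $X_i$ is an interval of $\omega$; $0\in X_0$ if $0\in\operatorname{supp}(s)$ and $X_0=\emptyset$ otherwise; $X_i\neq\emptyset$ for $i\in[k]$; and $\min X_i-\max X_{i-1}\ge 2$ for $i\in[k]$ (with $\max\emptyset=-\infty$). *)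

(* Defs.v *)
From mathcomp Require Import all_boot.
Set Implicit Arguments. Unset Strict Implicit. Unset Printing Implicit Defensive.

Inductive sign := Minus | Zero | Plus.

Definition is_zero (a : sign) : bool := if a is Zero then true else false.
Definition is_minus (a : sign) : bool := if a is Minus then true else false.

Definition opp_signs (a b : sign) : bool :=
  match a, b with Minus, Plus | Plus, Minus => true | _, _ => false end.

(* A finite sign sequence is represented by a finite list t; its i-th entry
   is [nth Zero t i] (entries beyond the list are 0).  Every element of
   \mathscr S arises this way. *)
Definition entry (t : seq sign) (i : nat) : sign := nth Zero t i.

Definition supp (t : seq sign) (i : nat) : bool := ~~ is_zero (entry t i).

Definition in_Splus (s : seq sign) : Prop := forall i, ~~ is_minus (entry s i).

(* SC(t): number of pairs i<j with {t_i,t_j}={-,+} and t_k=0 for i<k<j.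
   Pairs with j >= size t never count since then t_j = 0. *)
Definition SC (t : seq sign) : nat :=
  \sum_(0 <= j < size t) \sum_(0 <= i < j)
     [&& opp_signs (entry t i) (entry t j)
       & all (fun k => is_zero (entry t k)) (iota i.+1 (j - i.+1))].

Definition compatible (s t : seq sign) : Prop :=
  forall i, entry t i = Minus \/ entry t i = Zero \/ entry t i = entry s i.

Definition dfrak_is (s : seq sign) (n : nat) : Prop :=
  (exists2 t, compatible s t & SC t = n) /\
  (forall t, compatible s t -> SC t <= n).

Definition is_interval (X : pred nat) : Prop :=
  forall x y z, x <= y <= z -> X x -> X z -> X y.

Definition interval_decomposition (s : seq sign) (k : nat) (X : nat -> pred nat)
  : Prop :=
  (forall i, i <= k -> is_interval (X i)) /\
  [/\
      forall x, supp s x <-> exists2 i, i <= k & X i x,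
      forall i j x, i <= k -> j <= k -> i != j -> X i x -> X j x -> False,
      (if supp s 0 then is_true (X 0 0) else forall x, ~~ X 0 x),
      forall i, 1 <= i <= k -> exists x, X i x
    &
      forall i x y, 1 <= i <= k -> X i x -> X i.-1 y -> y + 2 <= x ].

(* #X for X contained in supp(s) \subseteq [0, size s). *)
Definition card_in (s : seq sign) (X : pred nat) : nat :=
  count X (iota 0 (size s)).

(* Main.v *)
Require Import Defs.
From mathcomp Require Import all_boot zify.
Set Implicit Arguments. Unset Strict Implicit.

Fixpoint sc_aux (L : sign) (t : seq sign) : nat :=
  match t with
  | [::] => 0
  | a :: t' => if a is Zero then sc_aux L t' else opp_signs L a + sc_aux a t'
  end.

Fixpoint fnz (t : seq sign) : sign :=
  match t with [::] => Zero | a :: t' => if a is Zero then fnz t' else a end.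

Lemma all_shift (b : sign) (t : seq sign) (P : sign -> bool) m n :
  all (fun k => P (entry (b :: t) k)) (iota m.+1 n) = all (fun k => P (entry t k)) (iota m n).
Proof. by rewrite -addn1 addnC iotaDl all_map. Qed.

Lemma first_sum (a : sign) (t : seq sign) :
  \sum_(0 <= j < size t) (opp_signs a (entry t j) && all (fun k => is_zero (entry t k)) (iota 0 j))
  = opp_signs a (fnz t).
Proof.
elim: t => [|b t IH]; first by rewrite big_geq //; case: a.
rewrite /= big_nat_recl //=.
under eq_bigr => j _ do rewrite all_shift.
case: b => /=.
- by rewrite big1 ?addn0 ?andbT // => j _; rewrite andbF.
- by rewrite -IH; case: (a) => /=.
- by rewrite big1 ?addn0 ?andbT // => j _; rewrite andbF.
Qed.

Lemma SC_cons a t : SC (a :: t) = opp_signs a (fnz t) + SC t.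
Proof.
rewrite /SC /= big_nat_recl // big_geq // add0n.
under eq_bigr => j _ do rewrite big_nat_recl // subSS subn0 all_shift.
under eq_bigr => j _ do under eq_bigr => i _ do rewrite subSS all_shift.
by rewrite big_split /= first_sum.
Qed.

Lemma sc_auxE L t : sc_aux L t = opp_signs L (fnz t) + SC t.
Proof.
elim: t L => [|b t IH] L /=; first by rewrite /SC big_geq //; case: L.
rewrite SC_cons; case: b => /=; rewrite IH //; case: L => //.
Qed.

Lemma SC_sc t : SC t = sc_aux Zero t.
Proof. by rewrite sc_auxE. Qed.

Definition isPlus (a : sign) : bool := if a is Plus then true else false.
Definition runlen (l : seq sign) : nat := find (fun a => ~~ isPlus a) l.
Definition Fs (s : seq sign) : nat :=
  \sum_(0 <= p < size s)
     (if isPlus (entry s p) && ~~ odd (runlen (drop p.+1 s)) then 2 else 0).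
Definition hs (s : seq sign) : bool := odd (runlen s).

Lemma Fs_nil : Fs [::] = 0. Proof. by rewrite /Fs big_geq. Qed.
Lemma Fs_cons a s : Fs (a :: s) = (if isPlus a && ~~ hs s then 2 else 0) + Fs s.
Proof. by rewrite /Fs /= big_nat_recl // drop0. Qed.
Lemma hs_nil : hs [::] = false. Proof. by []. Qed.
Lemma hs_cons a s : hs (a :: s) = isPlus a && ~~ hs s.
Proof. by case: a. Qed.
Lemma hs_F s : hs s -> 2 <= Fs s.
Proof.
case: s => [|a s] //. rewrite hs_cons Fs_cons => ->. by [].
Qed.

Definition V (L : sign) (s : seq sign) : nat :=
  match L with Minus => Fs s | Zero => Fs s - hs s | Plus => Fs s + 1 - 2 * hs s end.

Lemma splus_cons a s : in_Splus (a :: s) -> a <> Minus /\ in_Splus s.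
Proof. move=> H; split; first by move: (H 0); rewrite /entry /=; case: (a). by move=> i; apply: (H i.+1). Qed.

Lemma comp_cons s t a b : compatible (a :: s) (b :: t) ->
  (b = Minus \/ b = Zero \/ b = a) /\ compatible s t.
Proof. move=> H; split; [exact: (H 0)|by move=> i; apply: (H i.+1)]. Qed.

Lemma noplus_bound L t : (forall i, entry t i <> Plus) -> sc_aux L t <= (if L is Plus then 1 else 0).
Proof.
elim: t L => [|b t IH] L H /=; first by case: L.
have Hb : b <> Plus by apply: (H 0).
have Ht : forall i, entry t i <> Plus by move=> i; apply: (H i.+1).
clear H; case: b Hb => // _; last exact: IH.
have := IH Minus Ht. case: L => /=; lia.
Qed.

Lemma upper s : in_Splus s -> forall L t, compatible s t -> sc_aux L t <= V L s.
Proof.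
elim: s => [|a s IH] Hs L t Hc.
  rewrite /V Fs_nil hs_nil.
  have Hn : forall i, entry t i <> Plus by move=> i; case: (Hc i) => [->|[->|->]] //; rewrite /entry nth_nil.
  have := noplus_bound L Hn; case: L => /=; lia.
have [Ha Hs'] := splus_cons Hs.
case: t Hc => [|b t] Hc; first by [].
have [Hb Hc'] := comp_cons Hc.
have IHM := IH Hs' Minus t Hc'. have IHZ := IH Hs' Zero t Hc'. have IHP := IH Hs' Plus t Hc'.
move: IHM IHZ IHP; rewrite /V Fs_cons hs_cons.
have := @hs_F s.
clear Hs Hc IH; case: (hs s); case: a Ha Hb => // _; case=> [->|[->|->]]; case: L => /=; lia.
Qed.

Definition choosePlus (a L : sign) (b : bool) : bool :=
  match a, L with Plus, Zero | Plus, Minus => ~~ b | _, _ => false end.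

Fixpoint T (L : sign) (s : seq sign) : seq sign :=
  match s with
  | [::] => if L is Plus then [:: Minus] else [::]
  | a :: s' => if choosePlus a L (hs s') then Plus :: T Plus s' else Minus :: T Minus s'
  end.

Lemma T_comp s L : compatible s (T L s).
Proof.
elim: s L => [|a s IH] L i.
  by case: L; case: i => [|i]; rewrite /entry /= ?nth_nil; auto.
rewrite /=; case E: (choosePlus a L (hs s)); case: i => [|i]; rewrite /entry /=;
  try (by left); try (by apply: IH).
by right; right; case: a E.
Qed.

Lemma T_val s : in_Splus s -> forall L, sc_aux L (T L s) = V L s.
Proof.
elim: s => [|a s IH] Hs L.
  by rewrite /V Fs_nil hs_nil; case: L.
have [Ha Hs'] := splus_cons Hs.
have IHM := IH Hs' Minus. have IHP := IH Hs' Plus.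
move: IHM IHP; rewrite /= /V Fs_cons hs_cons.
have := @hs_F s.
clear Hs IH; case: (hs s); case: a Ha => // _; case: L => /=; lia.
Qed.

Lemma supp_plus s x : in_Splus s -> supp s x = isPlus (entry s x).
Proof. move=> H; move: (H x); rewrite /supp; by case: (entry s x). Qed.

Lemma supp_lt s x : supp s x -> x < size s.
Proof.
rewrite /supp /entry; case: (ltnP x (size s)) => // H.
by rewrite nth_default.
Qed.

Lemma runlen_spec l : (forall j, j < runlen l -> entry l j = Plus) /\ ~~ isPlus (entry l (runlen l)).
Proof.
elim: l => [|a l [IH1 IH2]]; first by split => // j; rewrite /runlen.
rewrite /runlen /=; case: a => /=; split => //; case => //= j Hj.
Qed.

Lemma X_supp s k X i x : interval_decomposition s k X -> i <= k -> X i x -> supp s x.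
Proof. case=> _ [H _ _ _ _] Hi Hx. apply/H. by exists i. Qed.

Lemma chain s k X i j x y : interval_decomposition s k X ->
  j < i <= k -> X i x -> X j y -> y + 2 <= x.
Proof.
case=> _ [_ _ _ Hne Hgap].
elim: i x => [|i IH] x // /andP [Hji Hik] Hx Hy.
case: (ltngtP j i) => Hj.
- have [z Hz] : exists z, X i z by apply: Hne; lia.
  have := IH z ltac:(apply/andP; lia) Hz Hy.
  have := Hgap i.+1 x z ltac:(lia) Hx Hz. lia.
- lia.
- subst j. exact: (Hgap i.+1 x y ltac:(lia) Hx Hy).
Qed.

Lemma same s k X i j x y : interval_decomposition s k X ->
  i <= k -> j <= k -> X i x -> X j y -> x <= y.+1 -> y <= x.+1 -> i = j.
Proof.
move=> D Hi Hj Hx Hy H1 H2.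
case: (ltngtP i j) => // H.
- have := chain D (i := j) (j := i) ltac:(apply/andP; lia) Hy Hx. lia.
- have := chain D (i := i) (j := j) ltac:(apply/andP; lia) Hx Hy. lia.
Qed.

Lemma supp_X s k X x : interval_decomposition s k X -> supp s x -> exists2 j, j <= k & X j x.
Proof. by case=> _ [H _ _ _ _] /H. Qed.

Lemma step1 s k X i p : in_Splus s -> interval_decomposition s k X -> i <= k -> X i p ->
  runlen (drop p.+1 s) = count (X i) (iota p.+1 (size s - p.+1)).
Proof.
move=> Hs D Hik Hp.
set r := runlen (drop p.+1 s).
have [R1 R2] := runlen_spec (drop p.+1 s).
rewrite -/r /entry nth_drop in R2.
have R1' : forall j, j < r -> isPlus (entry s (p.+1 + j)).
  by move=> j /R1; rewrite /entry nth_drop => ->.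
have Hsp : supp s p := X_supp D Hik Hp.
have Hlt := supp_lt Hsp.
have Hin : forall m, m <= r -> X i (p + m).
  elim=> [|m IH] Hm; first by rewrite addn0.
  have Hs1 : supp s (p + m.+1) by rewrite supp_plus // addnS -addSn; apply: R1'; lia.
  have Hpm := IH ltac:(lia).
  have [j Hj HX] := supp_X D Hs1.
  have E := same D Hj Hik HX Hpm ltac:(lia) ltac:(lia).
  by rewrite -E.
have Hout : forall x, p + r < x -> ~~ X i x.
  move=> x Hx; apply/negP => HXx.
  case: (D) => Dint _.
  have HX : X i (p.+1 + r) by apply: (Dint i Hik p _ x) => //; apply/andP; lia.
  have := X_supp D Hik HX. by rewrite supp_plus // (negbTE R2).
have Hr : p + r < size s.
  case: r Hin {R1 R2 R1' Hout} => [|r] Hin; first by rewrite addn0.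
  exact: supp_lt (X_supp D Hik (Hin r.+1 (leqnn _))).
have -> : size s - p.+1 = r + (size s - p.+1 - r) by lia.
rewrite iotaD count_cat.
rewrite (@eq_in_count _ _ predT); last first.
  move=> x; rewrite mem_iota => /andP [H1 H2].
  have -> : x = p + (x - p) by lia.
  by rewrite Hin //; lia.
rewrite count_predT size_iota (@eq_in_count _ _ pred0) ?count_pred0 ?addn0 //.
move=> x; rewrite mem_iota => /andP [H1 H2].
by apply/negbTE/Hout; lia.
Qed.

Lemma sum_interval (X : pred nat) n d a : a + d = n ->
  \sum_(a <= p < n) (if X p then (if ~~ odd (count X (iota p.+1 (n - p.+1))) then 2 else 0) else 0)
  = 2 * uphalf (count X (iota a d)).
Proof.
elim: d a => [|d IH] a Ha; first by rewrite big_geq //; lia.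
rewrite big_ltn; last by lia.
rewrite (IH a.+1) /=; last by lia.
have -> : n - a.+1 = d by lia.
case: (X a) => /=; last by [].
set c := count X _.
rewrite !uphalf_half /=.
case: (odd c) => /=; lia.
Qed.

Lemma partition s k X : in_Splus s -> interval_decomposition s k X ->
  Fs s = \sum_(0 <= i < k.+1) 2 * uphalf (card_in s (X i)).
Proof.
move=> Hs D.
rewrite /Fs.
set n := size s.
transitivity (\sum_(0 <= p < n) \sum_(0 <= i < k.+1)
   (if X i p then (if ~~ odd (count (X i) (iota p.+1 (n - p.+1))) then 2 else 0) else 0)).
  apply: eq_big_nat => p Hp.
  case Hsp: (supp s p).
  - have [i0 Hi0 HX] := supp_X D Hsp.
    rewrite (big_cat_nat _ (n := i0)) //=; last by lia.
    rewrite (big_cat_nat _ (m := i0) (n := i0.+1)) //=. 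
    rewrite big_nat1 HX -(step1 Hs D Hi0 HX) -supp_plus // Hsp.
    rewrite big1_seq ?add0n; last first.
      move=> i /andP [_]; rewrite mem_iota => Hi.
      case HXi: (X i p) => //.
      have := same D (ltnW (leq_trans _ Hi0)) Hi0 HXi HX (leqnSn _) (leqnSn _).
      move: Hi => /andP [_]; rewrite add0n; lia.
    rewrite big1_seq ?addn0 //.
      move=> i /andP [_]; rewrite mem_iota => Hi.
      case HXi: (X i p) => //.
      have Hik : i <= k by lia.
      have := same D Hik Hi0 HXi HX (leqnSn _) (leqnSn _).
      lia.
  - rewrite -supp_plus // Hsp /= big1_seq // => i /andP [_]; rewrite mem_iota => Hi.
    case HXi: (X i p) => //.
    have : supp s p by apply: (X_supp D _ HXi); lia.
    by rewrite Hsp.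
rewrite exchange_big_nat.
apply: eq_big_nat => i _.
by rewrite (sum_interval _ (a := 0) (d := n)).
Qed.

Lemma card0 s k X : in_Splus s -> interval_decomposition s k X -> card_in s (X 0) = runlen s.
Proof.
move=> Hs D; have D' := D; case: D' => _ [_ _ H0 _ _].
rewrite /card_in.
case Hs0: (supp s 0) H0 => H0.
- have := step1 Hs D (leq0n k) H0.
  case: s Hs D Hs0 => [|a s] Hs D Hs0; first by [].
  rewrite supp_plus // /entry /= in Hs0.
  rewrite /= H0 /runlen /= drop0 subSS subn0 => <-.
  by case: (a) Hs0.
- rewrite (@eq_count _ _ pred0) ?count_pred0; last by move=> x; apply/negbTE.
  case: s Hs D Hs0 => [|a s] Hs D Hs0; first by [].
  rewrite supp_plus // /entry /= in Hs0.
  by rewrite /runlen /=; case: (a) Hs0.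
Qed.

Lemma formula s k X : in_Splus s -> interval_decomposition s k X ->
  card_in s (X 0) + \sum_(1 <= i < k.+1) 2 * uphalf (card_in s (X i)) = V Zero s.
Proof.
move=> Hs D.
rewrite /V (partition Hs D) (@big_ltn _ _ _ 0) // (card0 Hs D) /hs.
set S := \sum_(1 <= i < _) _.
rewrite uphalf_half.
have := odd_double_half (runlen s).
case: (odd (runlen s)) => /=; rewrite -muln2; lia.
Qed.

Theorem mainTheorem2 (s : seq sign) (k : nat) (X : nat -> pred nat) :
  in_Splus s ->
  interval_decomposition s k X ->
  dfrak_is s (card_in s (X 0) +
              \sum_(1 <= i < k.+1) 2 * uphalf (card_in s (X i))).
Proof.
move=> Hs D.
rewrite (formula Hs D).
split.
- exists (T Zero s); first exact: T_comp.
  by rewrite SC_sc T_val.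
- move=> t Ht. rewrite SC_sc. exact: upper.
Qed.
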